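(* Let $k\ge 1$, let $A_k$ be a $k$-atom and let $s$ be a seed of $A_k$. Then the tree $T_k$ is (isomorphic to) a subgraph of the path tree of $(A_k,s)$, and $T_k$ is equal to (isomorphic to) this path tree if and only if $A_k$ is isomorphic to $T_k$.
   Context: $k$-atoms are defined recursively: $K_1$ is the only $1$-atom (its vertex is its seed). A graph $H$ is a $(k+1)$-atom if its vertices can be partitioned into an independent set $I$ and a set inducing a $k$-atom $A_k$ such that each vertex of $A_k$ has exactly one neighbor in $I$ and each vertex of $I$ has at least one neighbor in $A_k$; a seed of $H$ is a seed of $A_k$ (i.e. a vertex that can serve as the initial vertex of the recursive construction). For each $k$ there is a unique $k$-atom that is a tree, denoted $T_k$ (it has $2^{k-1}$ vertices; $T_{k+1}$ is obtained from $T_k$ by attaching one new pendant vertex to each vertex). The path tree of $(G,u)$ is the rooted tree whose vertices are the paths in $G$ starting at $u$ (the root being the path of length $0$), two such paths being adjacent iff one is obtained from the other by appending one edge at its end. *)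

(* Defs.v *)
(* finite simple graphs as symmetric irreflexive relations. *)
From mathcomp Require Import all_boot.
Set Implicit Arguments. Unset Strict Implicit. Unset Printing Implicit Defensive.

Section Atoms.
Variable T : finType.
Variable e : rel T.

Definition independent (A : {set T}) : Prop :=
  forall x y, x \in A -> y \in A -> ~~ e x y.

Fixpoint atom_on (k : nat) (A : {set T}) (s : T) : Prop :=
  match k with
  | 0 => False
  | 1 => A = [set s]
  | S k' =>
      exists B : {set T},
        [/\ B \subset A,
            atom_on k' B s,
            independent (A :\: B),
            (forall x, x \in B -> #|[set y in A :\: B | e x y]| = 1)
          & (forall y, y \in A :\: B -> exists2 x, x \in B & e x y)]
  end.

Definition is_atom (k : nat) (s : T) : Prop := atom_on k [set: T] s.

(* Vertices of the path tree of (G, u): paths of G starting at u, as the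
   sequence of their (distinct) vertices; [:: u] is the path of length 0. *)
Definition is_path_from (u : T) (p : seq T) : bool :=
  match p with
  | [::] => false
  | v :: q => (v == u) && path e u q && uniq p
  end.
End Atoms.

Definition ptree_edge (T : eqType) (p q : seq T) : bool :=
  ((size q == (size p).+1) && (take (size p) q == p)) ||
  ((size p == (size q).+1) && (take (size q) p == q)).

(* The tree T_k on vertex set {0, ..., 2^(k-1) - 1}: T_1 = K_1, and T_(k'+1) is
   obtained from T_k' by attaching the new pendant vertex i + 2^(k'-1) to each
   vertex i < 2^(k'-1). *)
Fixpoint Tk_rel (k : nat) (i j : nat) : bool :=
  match k with
  | 0 => false
  | 1 => false
  | S k' => [|| Tk_rel k' i j,
                (i < 2 ^ (k'.-1)) && (j == i + 2 ^ (k'.-1))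
              | (j < 2 ^ (k'.-1)) && (i == j + 2 ^ (k'.-1))]
  end.

Definition Tk_vert (k : nat) := 'I_(2 ^ k.-1).
Definition Tk_edge (k : nat) : rel (Tk_vert k) := fun i j => Tk_rel k i j.

Definition subgraph_embedding (A B : Type) (PA : pred A) (eA : rel A)
  (PB : pred B) (eB : rel B) (f : A -> B) : Prop :=
  [/\ {in PA, forall x, PB (f x)},
      {in PA &, injective f}
    & {in PA &, forall x y, eA x y -> eB (f x) (f y)}].

Definition graph_iso (A B : Type) (PA : pred A) (eA : rel A)
  (PB : pred B) (eB : rel B) (f : A -> B) : Prop :=
  [/\ {in PA, forall x, PB (f x)},
      {in PA &, injective f},
      (forall y, PB y -> exists2 x, PA x & f x = y)
    & {in PA &, forall x y, eA x y = eB (f x) (f y)}].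

(* Main.v *)
Require Import Defs.
From mathcomp Require Import all_boot zify.
Set Implicit Arguments. Unset Strict Implicit. Unset Printing Implicit Defensive.

Lemma Tk_relS k i j : Tk_rel k.+2 i j = [|| Tk_rel k.+1 i j,
                (i < 2 ^ k) && (j == i + 2 ^ k)
              | (j < 2 ^ k) && (i == j + 2 ^ k)].
Proof. by []. Qed.

Lemma Tk_rel_sym k i j : Tk_rel k.+1 i j = Tk_rel k.+1 j i.
Proof.
elim: k => [|k IH] //.
rewrite !Tk_relS IH. by case: (Tk_rel _ _ _) => //=; rewrite orbC.
Qed.

Lemma Tk_rel_lt k i j : Tk_rel k.+1 i j -> (i < 2 ^ k) && (j < 2 ^ k).
Proof.
elim: k i j => [|k IH] i j //.
rewrite Tk_relS.
case/or3P => [/IH /andP[Hi Hj]|/andP[Hi /eqP->]|/andP[Hj /eqP->]]; rewrite expnS; lia.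
Qed.

Lemma take_rcons_size (T : Type) (r : seq T) u : take (size r) (rcons r u) = r.
Proof. by rewrite -cats1 take_size_cat. Qed.

Lemma prefix_rcons_eq (T : eqType) (r p : seq T) u :
  size (rcons r u) = (size p).+1 -> take (size p) (rcons r u) = p -> p = r.
Proof.
rewrite size_rcons => [[Hs]]; by rewrite -Hs take_rcons_size.
Qed.

Section Main.
Variable T : finType.
Variable e : rel T.
Variable s : T.
Hypothesis esym : symmetric e.
Hypothesis eirr : irreflexive e.

Definition surjP (A : {set T}) (F : nat -> seq T) N :=
  forall p, is_path_from e s p -> all (fun x => x \in A) p -> exists2 i, i < N & p = F i.

Definition lastP (A : {set T}) (F : nat -> seq T) k :=
  [/\ forall x, x \in A -> exists2 i, i < 2 ^ k & last s (F i) = x,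
      forall i j, i < 2 ^ k -> j < 2 ^ k -> last s (F i) = last s (F j) -> i = j
    & forall i j, i < 2 ^ k -> j < 2 ^ k ->
        e (last s (F i)) (last s (F j)) = Tk_rel k.+1 i j].

Definition mainP k (A : {set T}) (F : nat -> seq T) :=
 [/\ forall i, i < 2 ^ k -> is_path_from e s (F i) && all (fun x => x \in A) (F i),
     forall i j, i < 2 ^ k -> j < 2 ^ k -> F i = F j -> i = j,
     forall i j, i < 2 ^ k -> j < 2 ^ k -> Tk_rel k.+1 i j = ptree_edge (F i) (F j),
     surjP A F (2 ^ k) -> lastP A F k
   & (#|A| = 2 ^ k -> surjP A F (2 ^ k)) /\ #|A| <= 2 ^ k].

Lemma base A : atom_on e 1 A s -> exists F, mainP 0 A F.
Proof.
move=> /= ->; exists (fun _ => [:: s]); split.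
- by move=> i _ /=; rewrite eqxx in_set1 eqxx.
- move=> i j; lia.
- by [].
- move=> _; split.
  + by move=> x; rewrite in_set1 => /eqP ->; exists 0.
  + move=> i j; lia.
  + move=> i j; rewrite !expn0 => /[!ltnS] /[!leqn0] /eqP-> /eqP->.
    by rewrite /= eirr.
- split; last by rewrite cards1.
  move=> _ [|v q] //= /andP[/andP[/eqP-> Hp] Hu] /andP[_ Ha]; exists 0 => //.
  case: q Hp Hu Ha => [|x q] //= _.
  by rewrite !inE => /andP[/negP Hn _] /andP[/eqP Hx _]; case: Hn; rewrite Hx eqxx.
Qed.


Lemma is_path_from_prefix p1 p2 :
  is_path_from e s (p1 ++ p2) -> p1 != [::] -> is_path_from e s p1.
Proof.
case: p1 => [|v p1] // H _; move: H.
rewrite /is_path_from cat_cons => /andP[/andP[-> Hp] Hu].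
rewrite cat_path in Hp; case/andP: Hp => -> _ /=.
by rewrite -cat_cons cat_uniq in Hu; case/and3P: Hu.
Qed.

Lemma step k A : (forall B, atom_on e k.+1 B s -> exists F, mainP k B F) ->
  atom_on e k.+2 A s -> exists F, mainP k.+1 A F.
Proof.
move=> IH /= [B [sBA atB indI cardB nbrI]].
have [F [Fpath Finj Fedge Flast [Fsurj Fcard]]] := IH B atB.
set I := A :\: B in indI cardB nbrI.
pose w x := odflt x [pick y in I | e x y].
have wU x y : x \in B -> y \in I -> e x y -> y = w x.
  move=> xB yI exy; have /eqP/cards1P[z Hz] := cardB x xB.
  have : y \in [set y in I | e x y] by rewrite inE yI exy.
  rewrite Hz inE => /eqP ->.
  rewrite /w; case: pickP => [y' /andP[y'I exy']|H]; last by move: (H y); rewrite yI exy.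
  have : y' \in [set y in I | e x y] by rewrite inE y'I exy'.
  by rewrite Hz inE => /eqP ->.
have wP x : x \in B -> (w x \in I) && e x (w x).
  move=> xB; have /eqP/cards1P[z Hz] := cardB x xB.
  have : z \in [set y in I | e x y] by rewrite Hz set11.
  rewrite inE => /andP[zI exz]; by rewrite -(wU x z xB zI exz) zI exz.
have IB y : y \in I -> y \notin B by rewrite inE => /andP[].
have IA y : y \in I -> y \in A by rewrite inE => /andP[].
have BA x : x \in B -> x \in A by move=> xB; apply: (subsetP sBA).
have IBf y : y \in I -> y \in B -> False by move=> /IB /negP.
have BnI x : x \in B -> x \notin I by move=> xB; rewrite inE xB.
set N := 2 ^ k.
have N0 : 0 < N by rewrite expn_gt0.
have FB i x : i < N -> x \in F i -> x \in B.
  by move=> iN xF; have /andP[_ /allP] := Fpath i iN; apply.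
have FBall i : i < N -> all (fun x => x \in B) (F i).
  by move=> iN; have /andP[] := Fpath i iN.
have Fform i : i < N -> exists q, [/\ F i = s :: q, path e s q & uniq (s :: q)].
  move=> iN; have /andP[] := Fpath i iN.
  case: (F i) => [|v q] //= /andP[/andP[/eqP -> Hp] Hu] _; by exists q.
have lastB i : i < N -> last s (F i) \in B.
  move=> iN; have [q [Fq _ _]] := Fform i iN; apply: (FB i _ iN).
  by rewrite Fq /= mem_last.
have sB : s \in B.
  by have [q [Fq _ _]] := Fform 0 N0; apply: (FB 0 _ N0); rewrite Fq mem_head.
pose u i := w (last s (F i)).
have uI i : i < N -> u i \in I by move=> iN; have /andP[] := wP _ (lastB i iN).
have uE i : i < N -> e (last s (F i)) (u i) by move=> iN; have /andP[] := wP _ (lastB i iN).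
have uF i j : i < N -> j < N -> u i \notin F j.
  by move=> iN jN; apply/negP => /(FB j _ jN); apply/negP/IB/uI.
pose G i := if i < N then F i else rcons (F (i - N)) (u (i - N)).
have GO i : i < N -> G i = F i by rewrite /G => ->.
have GN i : G (i + N) = rcons (F i) (u i).
  by rewrite /G ltnNge leq_addl /= addnK.
have NS : 2 ^ k.+1 = N + N by rewrite expnS /N; lia.
have caseN j : j < 2 ^ k.+1 -> j < N \/ exists2 i, i < N & j = i + N.
  rewrite NS => jN; case: (ltnP j N) => H; [by left|right].
  by exists (j - N); lia.
have TkOO a b : a < N -> b < N -> Tk_rel k.+2 a b = Tk_rel k.+1 a b.
  move=> aN bN; rewrite Tk_relS /N.
  by case: (Tk_rel _ _ _) => //=; apply/negbTE; lia.
have TkON a i : a < N -> i < N -> Tk_rel k.+2 a (i + N) = (a == i).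
  move=> aN iN; rewrite Tk_relS.
  have -> : Tk_rel k.+1 a (i + N) = false.
    by apply/negbTE/negP => /Tk_rel_lt; rewrite /N; lia.
  rewrite /= -/N eqn_add2r eq_sym aN /=.
  by rewrite [i + N < N]ltnNge leq_addl /= orbF.
have TkNN i j : i < N -> j < N -> Tk_rel k.+2 (i + N) (j + N) = false.
  move=> iN jN; rewrite Tk_relS.
  have -> : Tk_rel k.+1 (i + N) (j + N) = false.
    by apply/negbTE/negP => /Tk_rel_lt; rewrite /N; lia.
  by rewrite /= -/N; apply/negbTE; lia.
have GNpath i : i < N -> is_path_from e s (G (i + N)) && all (fun x => x \in A) (G (i + N)).
  move=> iN; rewrite GN; have [q [Fq Hp Hu]] := Fform i iN.
  rewrite all_rcons IA ?uI //= (sub_all _ (FBall i iN)); last by move=> x /BA.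
  have := uF i i iN iN; have := uE i iN.
  rewrite Fq /= rcons_path rcons_uniq Hp eqxx /= => -> /=.
  rewrite inE negb_or mem_rcons inE negb_or andbT => /andP[Hus ->].
  move: Hu => /= /andP[-> ->]; by rewrite eq_sym Hus.
have Gpath j : j < 2 ^ k.+1 -> is_path_from e s (G j) && all (fun x => x \in A) (G j).
  case/caseN => [jN|[i iN ->]]; last exact: GNpath.
  rewrite GO //; have /andP[-> /= H] := Fpath j jN.
  by apply: sub_all H => x /BA.
have Ginj : forall i j, i < 2 ^ k.+1 -> j < 2 ^ k.+1 -> G i = G j -> i = j.
  have ON a i : a < N -> i < N -> G a <> G (i + N).
    move=> aN iN; rewrite GO // GN => H.
    by move: (uF i a iN aN); rewrite H mem_rcons mem_head.
  move=> i j /caseN[iN|[i' iN ->]] /caseN[jN|[j' jN ->]].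
  - by rewrite !GO //; apply: Finj.
  - by move/ON; case.
  - by move=> H; symmetry in H; move/ON: H; case.
  - rewrite !GN => /rcons_inj [/Finj H _]; by rewrite H.
exists G; split.
- exact: Gpath.
- exact: Ginj.
- have pesym p q : ptree_edge p q = ptree_edge q p by rewrite /ptree_edge orbC.
  have pON a i : a < N -> i < N -> ptree_edge (F a) (rcons (F i) (u i)) = (a == i).
    move=> aN iN; case: eqP => [->|Hai].
      by rewrite /ptree_edge size_rcons eqxx take_rcons_size eqxx.
    apply/negbTE/negP; rewrite /ptree_edge; case/orP => /andP[/eqP H1 /eqP H2].
      by apply: Hai; apply: (Finj a i aN iN (prefix_rcons_eq H1 H2)).
    have : u i \in F a by apply: (@mem_take (size (rcons (F i) (u i)))); rewrite H2 mem_rcons mem_head.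
    by rewrite (negbTE (uF i a iN aN)).
  have pNN i j : i < N -> j < N -> ptree_edge (rcons (F i) (u i)) (rcons (F j) (u j)) = false.
    have H1 a b : a < N -> b < N -> size (rcons (F b) (u b)) = (size (rcons (F a) (u a))).+1 ->
       take (size (rcons (F a) (u a))) (rcons (F b) (u b)) = rcons (F a) (u a) -> False.
      move=> aN bN Hs Ht; have := prefix_rcons_eq Hs Ht => Hab.
      by move: (uF a b aN bN); rewrite -Hab mem_rcons mem_head.
    move=> iN jN; apply/negbTE/negP; rewrite /ptree_edge.
    by case/orP => /andP[/eqP Hs /eqP Ht]; [apply: (H1 i j)|apply: (H1 j i)].
  move=> i j /caseN[iN|[i' iN ->]] /caseN[jN|[j' jN ->]].
  - by rewrite !GO // TkOO // Fedge.
  - by rewrite GO // GN TkON // pON.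
  - by rewrite (GO j jN) GN Tk_rel_sym TkON // pesym pON.
  - by rewrite !GN (TkNN i' j' iN jN) pNN.
- move=> HS.
  have Bsurj : surjP B F N.
    move=> p Hp HpB; have HpA : all (fun x => x \in A) p by apply: sub_all HpB => x /BA.
    have [j jN Hj] := HS p Hp HpA; subst p.
    case/caseN: jN => [jN|[i iN Ej]]; first by exists j; rewrite ?GO.
    move: HpB; rewrite Ej GN all_rcons => /andP[H _].
    by move: (IB _ (uI i iN)); rewrite H.
  have [Lsurj Linj Ledge] := Flast Bsurj.
  have bad : forall p xb y, is_path_from e s p -> all (fun x => x \in B) p -> y \in I ->
      e (last s p) y -> xb \in B -> xb \notin p -> e y xb -> False.
    move=> p xb y Hp HpB yI e1 xbB xbp e2.
    have yp : y \notin p by apply/negP => /(allP HpB); apply: IBf.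
    have Hr : is_path_from e s (rcons (rcons p y) xb).
      case: p Hp HpB xbp e1 yp => [|v q] // /andP[/andP[/eqP -> Hq] Hu] HpB xbp e1 yp.
      move: e1 => /= e1.
      rewrite /= !rcons_path Hq e1 last_rcons e2 eqxx /=.
      change (uniq (rcons (rcons (s :: q) y) xb)).
      rewrite !rcons_uniq Hu yp mem_rcons inE negb_or xbp !andbT.
      by apply/eqP => Exy; move: (IB _ yI); rewrite -Exy xbB.
    have HrA : all (fun x => x \in A) (rcons (rcons p y) xb).
      by rewrite !all_rcons BA // IA //=; apply: sub_all HpB => x /BA.
    have [j jN Hj] := HS _ Hr HrA.
    case/caseN: jN Hj => [jN|[i iN ->]].
      rewrite GO // => Hj; have : y \in F j by rewrite -Hj mem_rcons inE mem_rcons mem_head orbT.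
      by move/(FB j _ jN); apply: IBf.
    rewrite GN => /rcons_inj [_ Hx]; move: (IB _ (uI i iN)); by rewrite -Hx xbB.
  have winj : forall x1 x2, x1 \in B -> x2 \in B -> w x1 = w x2 -> x1 = x2.
    move=> x1 x2 B1 B2 Hw; apply/eqP/negPn/negP => /eqP neq.
    have /andP[yI e1] := wP x1 B1; have /andP[_ e2] := wP x2 B2; rewrite -Hw in e2.
    have [i1 i1N L1] := Lsurj x1 B1.
    have := Fpath i1 i1N; move: (F i1) L1 => P LP /andP[HP HPB].
    case: (boolP (x2 \in P)) => x2P; last first.
      by apply: (bad P x2 (w x1)) => //; [rewrite LP | rewrite esym].
    case/splitPr: x2P LP HP HPB => l1 l2 LP HP HPB.
    have Hu : uniq (l1 ++ x2 :: l2).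
      by case: (l1 ++ x2 :: l2) HP => [|v q] // /andP[].
    apply: (bad (rcons l1 x2) x1 (w x1)) => //.
    - apply: (@is_path_from_prefix _ l2); first by rewrite cat_rcons.
      by case: l1 {LP HP HPB Hu}.
    - by move: HPB; rewrite -cat_rcons all_cat => /andP[].
    - by rewrite last_rcons.
    - rewrite last_cat /= in LP.
      have x1l2 : x1 \in l2.
        have := mem_last x2 l2; rewrite LP inE => /orP[/eqP E|//].
        by case: neq.
      move: Hu; rewrite -cat_rcons cat_uniq => /and3P[_ /hasPn H _].
      exact: H.
    - by rewrite esym.
  have lastO i : i < N -> last s (G i) = last s (F i) by move=> iN; rewrite GO.
  have lastN i : last s (G (i + N)) = u i by rewrite GN last_rcons.
  split.
  + move=> x xA; case: (boolP (x \in B)) => xB.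
      have [i iN Li] := Lsurj x xB; exists i; first by rewrite NS; lia.
      by rewrite lastO.
    have xI : x \in I by rewrite inE xB xA.
    have [x0 x0B ex0] := nbrI x xI.
    have [i iN Li] := Lsurj x0 x0B; exists (i + N); first by rewrite NS; lia.
    by rewrite lastN /u Li; symmetry; apply: wU.
  + have ON a i : a < N -> i < N -> last s (G a) <> last s (G (i + N)).
      move=> aN iN; rewrite lastO // lastN => H.
      by move: (IB _ (uI i iN)); rewrite -H lastB.
    move=> i j /caseN[iN|[i' iN ->]] /caseN[jN|[j' jN ->]].
    * by rewrite !lastO //; apply: Linj.
    * by move/ON; case.
    * by move=> H; symmetry in H; move/ON: H; case.
    * rewrite !lastN => /winj H.
      by rewrite (Linj i' j' iN jN (H (lastB i' iN) (lastB j' jN))).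
  + have eON a i : a < N -> i < N -> e (last s (F a)) (u i) = (a == i).
      move=> aN iN; case: eqP => [->|Hai]; first by rewrite uE.
      apply/negbTE/negP => H; apply: Hai.
      have := wU _ _ (lastB a aN) (uI i iN) H => /winj H2.
      apply: Linj => //; symmetry; apply: H2; exact: lastB.
    move=> i j /caseN[iN|[i' iN ->]] /caseN[jN|[j' jN ->]].
    * by rewrite !lastO // TkOO // Ledge.
    * by rewrite lastO // lastN TkON // eON.
    * by rewrite (lastO j jN) lastN Tk_rel_sym TkON // esym eON.
    * rewrite !lastN (TkNN i' j' iN jN); apply/negbTE; apply: indI; exact: uI.
- have cardA : #|A| = #|B| + #|I| by rewrite -(cardsID B A) (setIidPr sBA).
  have Isub : #|I| <= #|[set w x | x in B]|.
    apply: subset_leq_card; apply/subsetP => y yI.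
    have [x xB exy] := nbrI y yI; rewrite (wU x y xB yI exy); exact: imset_f.
  have Iim := leq_imset_card w B.
  have FcardN : #|B| <= N := Fcard.
  have IleB : #|I| <= #|B| := leq_trans Isub Iim.
  split; last by rewrite cardA NS; lia.
  move=> HA.
  have cB : #|B| = N by move: HA; rewrite cardA NS; lia.
  have winj : {in B &, injective w}.
    apply/imset_injP; rewrite eqn_leq Iim /=; apply: leq_trans _ Isub; move: HA; rewrite cardA NS; lia.
  have uniqN y x1 x2 : y \in I -> x1 \in B -> x2 \in B -> e x1 y -> e x2 y -> x1 = x2.
    move=> yI B1 B2 e1 e2; apply: winj => //.
    by rewrite -(wU _ _ B1 yI e1) -(wU _ _ B2 yI e2).
  have shape : forall q x, x \in B -> path e x q -> all (fun x => x \in A) q -> uniq (x :: q) ->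
      all (fun x => x \in B) q \/ exists q' y, [/\ q = rcons q' y, all (fun x => x \in B) q' & y \in I].
    elim => [|z q IHq] x xB; first by left.
    rewrite /= => /andP[exz Hq] /andP[zA qA] /andP[xn Hu].
    case: (boolP (z \in B)) => zB.
      case: (IHq z zB Hq qA Hu) => [H|[q' [y [-> H1 H2]]]].
        by left.
      by right; exists (z :: q'), y; split; rewrite /= ?H1 ?zB.
    have zI : z \in I by rewrite inE zB zA.
    case: q Hq qA Hu {IHq} xn => [|z' q] Hq qA Hu xn.
      by right; exists [::], z.
    move: Hq qA xn => /= /andP[ezz' _] /andP[z'A _].
    have z'B : z' \in B.
      apply/negPn/negP => z'nB.
      have z'I : z' \in I by rewrite inE z'nB z'A.
      by move: (indI z z' zI z'I); rewrite ezz'.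
    have Exz : x = z' by apply: (uniqN z x z' zI xB z'B exz); rewrite esym.
    by rewrite Exz !inE eqxx !orbT.
  move=> [|v q] //= /andP[/andP[/eqP -> Hq] Hu] /andP[_ qA].
  case: (shape q s sB Hq qA Hu) => [qB|[q' [y [Eq q'B yI]]]].
    have P1 : is_path_from e s (s :: q) by rewrite /= eqxx Hq Hu.
    have P2 : all (fun x => x \in B) (s :: q) by rewrite /= sB qB.
    have [i iN Fi] := Fsurj cB (s :: q) P1 P2.
    by exists i; [rewrite NS; lia | rewrite GO].
  subst q.
  move: Hq; rewrite rcons_path => /andP[Hq' ey].
  have Hu' : uniq (s :: q').
    by move: Hu; change (uniq (rcons (s :: q') y) -> uniq (s :: q')); rewrite rcons_uniq => /andP[].
  have P1 : is_path_from e s (s :: q') by apply/andP; split; [rewrite eqxx Hq' | exact: Hu'].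
  have P2 : all (fun x => x \in B) (s :: q') by rewrite /= sB q'B.
  have [i iN Fi] := Fsurj cB (s :: q') P1 P2.
  exists (i + N); first by rewrite NS; lia.
  rewrite GN -Fi /u -Fi /=.
  congr (s :: rcons q' _); apply: wU => //.
  by have := lastB i iN; rewrite -Fi.
Qed.


Lemma mainL k A : atom_on e k.+1 A s -> exists F, mainP k A F.
Proof. by elim: k A => [|k IHk] A; [exact: base | apply: step]. Qed.

End Main.

Theorem lemma1 (T : finType) (e : rel T) (k : nat) (s : T) :
  symmetric e -> irreflexive e -> 1 <= k ->
  is_atom e k s ->
  (exists f : Tk_vert k -> seq T,
     subgraph_embedding predT (@Tk_edge k) (is_path_from e s) (@ptree_edge T) f) /\
  ((exists f : Tk_vert k -> seq T,
      graph_iso predT (@Tk_edge k) (is_path_from e s) (@ptree_edge T) f) <->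
   (exists g : T -> Tk_vert k,
      graph_iso predT e predT (@Tk_edge k) g)).
Proof.
move=> esym eirr; case: k => [|k] // _ Hat.
have [F [Fpath Finj Fedge Flast [Fsurj Fcard]]] := mainL esym eirr Hat.
have Fpath' (x : 'I_(2 ^ k)) : is_path_from e s (F x).
  by have /andP[] := Fpath x (ltn_ord x).
have Finj' (x y : 'I_(2 ^ k)) : F x = F y -> x = y.
  by move=> H; apply: val_inj; apply: Finj (ltn_ord x) (ltn_ord y) H.
split.
  exists (fun x : Tk_vert k.+1 => F x); split.
  - by move=> x _; apply: Fpath'.
  - by move=> x y _ _; apply: Finj'.
  - by move=> x y _ _; rewrite /Tk_edge (Fedge _ _ (ltn_ord x) (ltn_ord y)).
split.
  case=> f [f1 f2 f3 f4].
  have HS : surjP e s [set: T] F (2 ^ k).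
    move=> p Hp _.
    pose h (y : 'I_(2 ^ k)) := odflt y [pick x | f x == F y].
    have hP y : f (h y) = F y.
      rewrite /h; case: pickP => [x /eqP //|H].
      have [x _ fx] := f3 (F y) (Fpath' y).
      by move: (H x); rewrite fx eqxx.
    have hinj : injective h.
      by move=> y1 y2 H; apply: Finj'; rewrite -!hP H.
    have [x _ fx] := f3 p Hp.
    have /codomP [y Ey] := injF_onto hinj x.
    by exists y => //; rewrite -fx Ey hP.
  have [Lsurj Linj Ledge] := Flast HS.
  have N0 : 0 < 2 ^ k by rewrite expn_gt0.
  pose i0 := Ordinal N0.
  pose g v := odflt i0 [pick i : 'I_(2 ^ k) | last s (F i) == v].
  have gP v : last s (F (g v)) = v.
    have [i iN Li] := Lsurj v (in_setT v).
    rewrite /g; case: pickP => [j /eqP //| H].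
    by move: (H (Ordinal iN)); rewrite /= Li eqxx.
  exists g; split.
  - by [].
  - by move=> x y _ _ H; rewrite -(gP x) -(gP y) H.
  - move=> y _; exists (last s (F y)) => //; apply: val_inj.
    by apply: Linj (ltn_ord _) (ltn_ord _) _; rewrite gP.
  - move=> x y _ _; rewrite /Tk_edge -Ledge ?ltn_ord //.
    by rewrite !gP.
case=> g [g1 g2 g3 g4].
have ginj : injective g by move=> x y; apply: g2.
have cardT : #|[set: T]| = 2 ^ k.
  rewrite cardsT; apply/eqP; rewrite eqn_leq; apply/andP; split.
    by have := leq_card g ginj; rewrite card_ord.
  have Eim : [set g x | x in [set: T]] = [set: 'I_(2 ^ k)].
    apply/setP => y; rewrite inE; have [x _ <-] := g3 y isT; exact: imset_f.
  by have := leq_imset_card g [set: T]; rewrite Eim !cardsT card_ord.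
have HS := Fsurj cardT.
exists (fun x : Tk_vert k.+1 => F x); split.
- by move=> x _; apply: Fpath'.
- by move=> x y _ _; apply: Finj'.
- move=> p Hp.
  have [i iN ->] := HS p Hp (introT allP (fun x _ => in_setT x)).
  by exists (Ordinal iN).
- by move=> x y _ _; rewrite /Tk_edge (Fedge _ _ (ltn_ord x) (ltn_ord y)).
Qed.
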